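(* Let $K$ be a field of characteristic $p>0$ and let $n=3$. Let $X=(x_{ij})_{1\le i,j\le 3}$ and $Y=(y_{ij})_{1\le i,j\le 3}$ be $3\times 3$ matrices of indeterminates over $K$, let $R=K[X,Y]$ be the polynomial ring in the $18$ variables $x_{ij},y_{ij}$, and let $I\subseteq R$ be the ideal generated by the off-diagonal entries of the commutator $XY-YX$. Then $R/I$ is $F$-pure.
   Context: A ring $S$ of characteristic $p>0$ is $F$-pure if the Frobenius map $F:S\to S$, $s\mapsto s^p$, is a pure ring homomorphism (i.e., $M\to M\otimes_S F_*S$ is injective for every $S$-module $M$). *)

(* Defs.v *)
From HB Require Import structures.
From mathcomp Require Import all_boot all_order all_algebra.
From mathcomp Require Import mpoly.
Set Implicit Arguments. Unset Strict Implicit. Unset Printing Implicit Defensive.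
Import GRing.Theory.
Local Open Scope ring_scope.

(* Polynomial ring R = K[X,Y] in 18 variables: x_ij = 'X_(lshift 9 (ij)),
   y_ij = 'X_(rshift 9 (ij)), where ij = mxvec_index i j : 'I_(3*3). *)
Definition polyR (K : fieldType) := {mpoly K[3 * 3 + 3 * 3]}.

Definition matX (K : fieldType) : 'M[polyR K]_3 :=
  \matrix_(i < 3, j < 3) 'X_(lshift (3 * 3) (mxvec_index i j)).
Definition matY (K : fieldType) : 'M[polyR K]_3 :=
  \matrix_(i < 3, j < 3) 'X_(rshift (3 * 3) (mxvec_index i j)).

Definition commXY (K : fieldType) : 'M[polyR K]_3 :=
  matX K *m matY K - matY K *m matX K.

Definition in_I (K : fieldType) (r : polyR K) : Prop :=
  exists c : 'I_3 -> 'I_3 -> polyR K,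
    r = \sum_(i < 3) \sum_(j < 3 | i != j) c i j * commXY K i j.

(* Tensor product M (x)_S F_*S via its universal property: maps b : M -> S -> N
   into an abelian group N, biadditive and S-balanced, where S acts on F_*S
   through Frobenius: s . t = s^p t. *)
Definition frob_balanced (S : comPzRingType) (p : nat) (M : lmodType S)
    (N : zmodType) (b : M -> S -> N) : Prop :=
  [/\ forall m1 m2 t, b (m1 + m2) t = b m1 t + b m2 t,
      forall m t1 t2, b m (t1 + t2) = b m t1 + b m t2 &
      forall (s : S) m t, b (s *: m) t = b m (s ^+ p * t)].

(* m (x) 1 = 0 in M (x)_S F_*S *)
Definition frob_tensor_one_zero (S : comPzRingType) (p : nat) (M : lmodType S)
    (m : M) : Prop :=
  forall (N : zmodType) (b : M -> S -> N), frob_balanced p b -> b m 1 = 0.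

Definition Fpure (S : comPzRingType) (p : nat) : Prop :=
  forall (M : lmodType S) (m : M), frob_tensor_one_zero p m -> m = 0.

(* Main.v *)
Require Import Defs.
From HB Require Import structures.
From mathcomp Require Import all_boot all_order all_algebra.
From mathcomp Require Import mpoly.
From mathcomp Require classical_sets boolp.
From mathcomp Require Import ring zify.
Set Implicit Arguments. Unset Strict Implicit. Unset Printing Implicit Defensive.
Import GRing.Theory.
Local Open Scope ring_scope.

Section Frob.
Variables (R : comNzRingType) (p : nat) (hp : p \in [pchar R]).
Lemma frobD (x y : R) : (x + y) ^+ p = x ^+ p + y ^+ p.
Proof. by rewrite -!(pFrobenius_autE hp) pFrobenius_autD_comm //; exact: mulrC. Qed.
Lemma frobN (x : R) : (- x) ^+ p = - x ^+ p.
Proof. by rewrite -!(pFrobenius_autE hp) pFrobenius_autN. Qed.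
Lemma frobB (x y : R) : (x - y) ^+ p = x ^+ p - y ^+ p.
Proof. by rewrite frobD frobN. Qed.
End Frob.

Section Sigma.
Variables (K : fieldType) (p : nat) (hp : p \in [pchar K]).

Definition Wclosed (W : K -> Prop) :=
  [/\ (forall x y, W x -> W y -> W (x + y)),
      (forall l x, W x -> W (l ^+ p * x)) & ~ W 1].

Lemma p_gt0 : (0 < p)%N.
Proof. by have /andP[/prime_gt0] := hp. Qed.

Lemma exists_sigma : exists sigma : K -> K,
  [/\ forall x y, sigma (x + y) = sigma x + sigma y,
      forall l x, sigma (l ^+ p * x) = l * sigma x & sigma 1 = 1].
Proof.
have [A [[AD AZ A1] Amax]] : exists A, Wclosed A /\
    (forall B, classical_sets.proper A B -> ~ Wclosed B).
  apply: (@classical_sets.Zorn_bigcup K Wclosed) => F FP Ftot; split.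
  - move=> x y [X FX Xx] [Y FY Yy].
    have [XY|YX] := Ftot X Y FX FY.
    + by exists Y => //; have [+ _ _] := FP Y FY; apply; [apply: XY|].
    + by exists X => //; have [+ _ _] := FP X FX; apply; [|apply: YX].
  - by move=> l x [X FX Xx]; exists X => //; have [_ + _] := FP X FX; apply.
  - by move=> [X FX X1]; have [_ _] := FP X FX; apply.
pose A0 x := A x \/ x = 0.
have A0D x y : A0 x -> A0 y -> A0 (x + y).
  case=> [Ax|->]; case=> [Ay|->]; rewrite ?addr0 ?add0r; rewrite /A0; auto.
have A0Z l x : A0 x -> A0 (l ^+ p * x).
  by case=> [Ax|->]; [left; apply: AZ|right; rewrite mulr0].
have A0N x : A0 x -> A0 (- x).
  move=> /(A0Z (-1)); rewrite frobN // expr1n mulN1r; exact.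
have A01 : ~ A0 1 by case=> //; apply/eqP; exact: oner_neq0.
have ex : forall mu, exists l, A0 (mu - l ^+ p).
  move=> mu; apply: boolp.contrapT => hno.
  pose B x := exists a (nu : K), A0 a /\ x = a + nu ^+ p * mu.
  apply: (Amax B); last first.
    split.
    - move=> x y [a [nu [Aa ->]]] [a' [nu' [Aa' ->]]].
      exists (a + a'), (nu + nu'); split; first exact: A0D.
      by rewrite frobD // mulrDl; ring.
    - move=> l x [a [nu [Aa ->]]]; exists (l ^+ p * a), (l * nu); split.
        exact: A0Z.
      by rewrite exprMn; ring.
    - move=> [a [nu [Aa e1]]].
      have [nu0|nunz] := eqVneq nu 0.
        by move: e1; rewrite nu0 expr0n /= (gtn_eqF p_gt0) mul0r addr0 => e1; apply: A01; rewrite e1.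
      apply: hno; exists (nu^-1).
      have -> : mu - nu^-1 ^+ p = (- nu^-1) ^+ p * a.
        rewrite frobN // mulNr exprVn.
        have -> : mu = (nu ^+ p)^-1 * (1 - a).
          by rewrite e1 addrC addKr mulrA mulVf ?mul1r // expf_neq0.
        by rewrite mulrBr mulr1; ring.
      exact: A0Z.
  split.
    by move=> x Ax; exists x, 0; split; [left|]; rewrite ?expr0n /= ?(gtn_eqF p_gt0) ?mul0r ?addr0.
  move=> BA; apply: hno; exists 0.
  have : B mu by exists 0, 1; split; [right|]; rewrite ?expr1n ?mul1r ?add0r.
  by move=> /BA Amu; rewrite expr0n /= (gtn_eqF p_gt0) subr0; left.
have uniq l l' mu : A0 (mu - l ^+ p) -> A0 (mu - l' ^+ p) -> l = l'.
  move=> h h'; have := A0D _ _ h (A0N _ h').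
  have -> : mu - l ^+ p + - (mu - l' ^+ p) = (l' - l) ^+ p by rewrite frobB //; ring.
  have [->//|dnz] := eqVneq l l'.
  have dnz' : l' - l != 0 by rewrite subr_eq0 eq_sym.
  move=> /(A0Z ((l' - l)^-1)); rewrite -exprMn mulVf // expr1n => /A01 [].
pose sigma mu := projT1 (boolp.cid (ex mu)).
have sP mu : A0 (mu - sigma mu ^+ p) by rewrite /sigma; case: boolp.cid.
exists sigma; split.
- move=> x y; apply: (uniq _ _ (x + y) (sP (x + y))).
  have := A0D _ _ (sP x) (sP y); rewrite frobD //.
  by have -> : x - sigma x ^+ p + (y - sigma y ^+ p) = x + y - (sigma x ^+ p + sigma y ^+ p) by ring.
- move=> l x; apply: (uniq _ _ (l ^+ p * x) (sP _)).
  have := A0Z l _ (sP x); rewrite exprMn mulrBr //.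
- apply: (uniq _ _ 1 (sP 1)); rewrite expr1n subrr; by right.
Qed.
End Sigma.


Section Trace.
Variables (K : fieldType) (n p : nat) (hp : p \in [pchar K]) (sigma : K -> K).
Hypothesis sD : forall x y, sigma (x + y) = sigma x + sigma y.
Hypothesis sZ : forall l x, sigma (l ^+ p * x) = l * sigma x.
Local Notation R := {mpoly K[n]}.

Lemma s0 : sigma 0 = 0.
Proof. by apply: (addrI (sigma 0)); rewrite -sD !addr0. Qed.

Definition divm (m : 'X_{1..n}) : 'X_{1..n} := [multinom (m i %/ p)%N | i < n].
Definition good (m : 'X_{1..n}) := [forall i, (m i %% p == p.-1)%N].
Definition T (m : 'X_{1..n}) (c : K) : R :=
  if good m then sigma c *: 'X_[divm m] else 0.
Definition phi (r : R) : R := \sum_(m <- msupp r) T m r@_m.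

Lemma T0 m : T m 0 = 0.
Proof. by rewrite /T s0 scale0r; case: ifP. Qed.
Lemma TD m c1 c2 : T m (c1 + c2) = T m c1 + T m c2.
Proof. by rewrite /T sD scalerDl; case: ifP; rewrite ?addr0. Qed.

Lemma phi_sub s r : uniq s -> {subset msupp r <= s} ->
  phi r = \sum_(m <- s) T m r@_m.
Proof.
move=> us sub; rewrite (bigID (fun m => m \in msupp r)) /=.
rewrite [X in _ + X]big1 ?addr0; last first.
  by move=> m; rewrite -mcoeff_eq0 => /eqP ->; rewrite T0.
rewrite -big_filter /phi; apply: perm_big; apply: uniq_perm.
- exact: msupp_uniq.
- exact: filter_uniq.
- by move=> m; rewrite mem_filter; case E: (m \in msupp r); rewrite ?andbF //= (sub _ E).
Qed.

Lemma phiD r1 r2 : phi (r1 + r2) = phi r1 + phi r2.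
Proof.
set s := undup (msupp r1 ++ msupp r2).
have us : uniq s by apply: undup_uniq.
rewrite (@phi_sub s (r1 + r2)) ?(@phi_sub s r1) ?(@phi_sub s r2) //.
- by rewrite -big_split /=; apply: eq_bigr => m _; rewrite mcoeffD TD.
- by move=> m mr; rewrite mem_undup mem_cat mr orbT.
- by move=> m mr; rewrite mem_undup mem_cat mr.
- move=> m; rewrite mem_undup mem_cat !mcoeff_msupp mcoeffD.
  by apply: contraR; rewrite negb_or !negbK => /andP[/eqP -> /eqP ->]; rewrite addr0.
Qed.

Lemma phi0 : phi 0 = 0.
Proof. by rewrite /phi msupp0 big_nil. Qed.

Lemma phi_sum (I : Type) (r : seq I) (P : pred I) (F : I -> R) :
  phi (\sum_(i <- r | P i) F i) = \sum_(i <- r | P i) phi (F i).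
Proof. by elim/big_rec2: _ => [|i y1 y2 _ <-]; rewrite ?phi0 ?phiD. Qed.

Lemma phiZX c m : phi (c *: 'X_[m]) = T m c.
Proof.
rewrite (@phi_sub [:: m]) //; last first.
  move=> m'; rewrite mcoeff_msupp mcoeffZ mcoeffX mem_seq1.
  by have [|] := eqVneq m m'; rewrite ?eqxx // mulr0 eqxx.
by rewrite big_cons big_nil addr0 mcoeffZ mcoeffX eqxx mulr1.
Qed.

Lemma pR : p \in [pchar R].
Proof. exact: (rmorph_pchar (@mpolyC n K)). Qed.

Lemma p_gt0' : (0 < p)%N.
Proof. by have /andP[/prime_gt0] := hp. Qed.

Lemma phi_frob_mono a l b c :
  phi ((l *: 'X_[a]) ^+ p * (c *: 'X_[b])) = l *: 'X_[a] * phi (c *: 'X_[b]).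
Proof.
rewrite -!mul_mpolyC exprMn -rmorphXn mpolyXn mulrACA -rmorphM -mpolyXD.
rewrite !mul_mpolyC !phiZX /T.
have -> : good ((a *+ p)%MM + b) = good b.
  apply: eq_forallb => i; rewrite mnmDE mulmnE modnMDl //.
case: ifP; rewrite ?mulr0 // => _.
rewrite sZ -!mul_mpolyC mulrACA -mpolyXD -rmorphM.
congr (_ * 'X_[_]); apply/mnmP => i.
by rewrite mnmDE !mnmE mulmnE divnMDl // p_gt0'.
Qed.

Lemma phi_frob s t : phi (s ^+ p * t) = s * phi t.
Proof.
elim/mpolyind: t => [|c b t _ _ IH]; first by rewrite mulr0 phi0 mulr0.
rewrite mulrDr !phiD IH mulrDr; congr (_ + _); clear IH.
elim/mpolyind: s => [|l a s _ _ IHs].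
  by rewrite expr0n /= (gtn_eqF p_gt0') !mul0r phi0.
by rewrite (frobD pR) mulrDl phiD IHs phi_frob_mono mulrDl.
Qed.
End Trace.

Section Weight.
Variables (K : fieldType) (n : nat) (w : 'I_n -> nat).
Local Notation R := {mpoly K[n]}.
Implicit Types (m M N : 'X_{1..n}) (P Q F : R).
Definition wt (m : 'X_{1..n}) : nat := (\sum_(i < n) w i * m i)%N.
Definition bounded (P : R) a := forall m, P@_m != 0 -> (wt m <= a)%N.
Definition top (P : R) a M := [/\ wt M = a, bounded P a &
   forall m, P@_m != 0 -> wt m = a -> m = M].

Lemma wtD m1 m2 : wt (m1 + m2)%MM = (wt m1 + wt m2)%N.
Proof. by rewrite /wt -big_split; apply: eq_bigr => i _; rewrite mnmDE mulnDr. Qed.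
Lemma wt0 : wt 0%MM = 0%N.
Proof. by rewrite /wt big1 // => i _; rewrite mnmE muln0. Qed.
Lemma wtU i : wt U_(i)%MM = w i.
Proof.
rewrite /wt (bigD1 i) //= big1 ?addn0; first by rewrite mnm1E eqxx muln1.
by move=> j; rewrite mnm1E eq_sym => /negbTE ->; rewrite muln0.
Qed.
Lemma wtMn m k : wt (m *+ k)%MM = (wt m * k)%N.
Proof. by rewrite /wt big_distrl; apply: eq_bigr => i _; rewrite mulmnE mulnA. Qed.
Lemma wt_mono m1 m2 : (forall i, m1 i <= m2 i)%N -> (wt m1 <= wt m2)%N.
Proof. by move=> h; apply: leq_sum => i _; rewrite leq_mul2l h orbT. Qed.

Lemma coef_extract (P : R) M :
  \sum_(m <- msupp P) P@_m * (m == M)%:R = P@_M.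
Proof.
transitivity ((\sum_(m <- msupp P) P@_m *: 'X_[m])@_M); last by rewrite -mpolyE.
rewrite raddf_sum /=; apply: eq_bigr => m _.
by rewrite mcoeffZ mcoeffX.
Qed.

Lemma coefM2 (P Q : R) m : (P * Q)@_m =
  \sum_(m1 <- msupp P) \sum_(m2 <- msupp Q) P@_m1 * Q@_m2 * (m1 + m2 == m)%MM%:R.
Proof.
rewrite mpolyME raddf_sum /= big_allpairs; apply: eq_bigr => m1 _.
apply: eq_bigr => m2 _ /=.
by rewrite mcoeffZ mcoeffX.
Qed.

Lemma boundedM P Q a b : bounded P a -> bounded Q b -> bounded (P * Q) (a + b).
Proof.
move=> bP bQ m; rewrite coefM2; apply: contraR => hm.
rewrite big_seq big1 // => m1; rewrite mcoeff_msupp => h1.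
rewrite big_seq big1 // => m2; rewrite mcoeff_msupp => h2.
case: eqP; rewrite ?mulr0 // => e; case/negP: hm.
by rewrite -e wtD leq_add // ?bP ?bQ.
Qed.

Lemma topM P Q a b M N : top P a M -> top Q b N ->
  top (P * Q) (a + b) (M + N)%MM /\ (P * Q)@_(M + N)%MM = P@_M * Q@_N.
Proof.
move=> [wM bP tP] [wN bQ tQ].
have key m1 m2 : P@_m1 != 0 -> Q@_m2 != 0 -> (wt (m1 + m2)%MM >= a + b)%N ->
    m1 = M /\ m2 = N.
  move=> h1 h2; rewrite wtD => hge.
  have l1 := bP _ h1; have l2 := bQ _ h2.
  have e1 : wt m1 = a by lia.
  have e2 : wt m2 = b by lia.
  by split; [apply: tP|apply: tQ].
split; first split.
- by rewrite wtD wM wN.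
- exact: boundedM.
- move=> m; rewrite coefM2 => hm em; apply: contraNeq hm => ne.
  rewrite big_seq big1 // => m1; rewrite mcoeff_msupp => h1.
  rewrite big_seq big1 // => m2; rewrite mcoeff_msupp => h2.
  case: eqP; rewrite ?mulr0 // => e.
  have [|e1 e2] := key m1 m2 h1 h2; first by rewrite e em.
  by case/negP: ne; rewrite -e e1 e2.
rewrite coefM2 -(coef_extract P M) big_distrl; apply: eq_big_seq => m1; rewrite mcoeff_msupp => h1.
rewrite -(coef_extract Q N) big_distrr /=; apply: eq_big_seq => m2; rewrite mcoeff_msupp => h2.
case: eqP => e.
  have [|e1 e2] := key m1 m2 h1 h2; first by rewrite e wtD wM wN.
  by rewrite e1 e2 !eqxx !mulr1.
have [e1|ne1] := eqVneq m1 M; have [e2|ne2] := eqVneq m2 N; rewrite ?mulr0 ?mul0r //.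
by case: e; rewrite e1 e2.
Qed.

Lemma boundedD P Q a : bounded P a -> bounded Q a -> bounded (P + Q) a.
Proof.
move=> bP bQ m; rewrite mcoeffD.
have [h|h] := eqVneq (P@_m) 0; first by rewrite h add0r; apply: bQ.
by move=> _; apply: bP.
Qed.

Lemma boundedN P a : bounded P a -> bounded (- P) a.
Proof. by move=> bP m; rewrite mcoeffN oppr_eq0; apply: bP. Qed.

Lemma boundedW P a b : bounded P a -> (a <= b)%N -> bounded P b.
Proof. by move=> bP ab m /bP h; apply: leq_trans ab. Qed.

Lemma topD P Q a b M : top P a M -> bounded Q b -> (b < a)%N ->
  top (P + Q) a M /\ (P + Q)@_M = P@_M.
Proof.
move=> [wM bP tP] bQ ba.
have Q0 m : (wt m >= a)%N -> Q@_m = 0.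
  by move=> h; apply/eqP; apply: contraTT h => /bQ h; rewrite -ltnNge (leq_ltn_trans h).
split; last by rewrite mcoeffD Q0 ?addr0 ?wM.
split => //; first by apply: boundedD => //; apply: boundedW (ltnW ba).
by move=> m; rewrite mcoeffD => h em; apply: tP => //; rewrite Q0 ?em // addr0 in h.
Qed.

Lemma topN P a M : top P a M -> top (- P) a M /\ (- P)@_M = - P@_M.
Proof.
move=> [wM bP tP]; split; last by rewrite mcoeffN.
by split => //; [exact: boundedN|move=> m; rewrite mcoeffN oppr_eq0; apply: tP].
Qed.

Lemma topX m : top 'X_[m] (wt m) m /\ ('X_[m] : R)@_m = 1.
Proof.
rewrite mcoeffX eqxx; split => //; split => //.
  by move=> m'; rewrite mcoeffX; have [->|] := eqVneq m m'; rewrite ?eqxx.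
by move=> m'; rewrite mcoeffX; have [->|] := eqVneq m m'; rewrite ?eqxx.
Qed.

Lemma topXn P a M k : top P a M -> top (P ^+ k) (a * k) (M *+ k)%MM /\ (P ^+ k)@_(M *+ k)%MM = P@_M ^+ k.
Proof.
move=> tP; elim: k => [|k [tk ck]].
  rewrite !expr0 muln0 mulm0n.
  have := topX 0%MM; rewrite mpolyX0 wt0 => -[t1 c1]; split => //.
have [t c] := topM tP tk.
by rewrite exprS mulnS mulmS c ck exprS.
Qed.

Lemma top_floor F a M0 m : top F a M0 -> F@_m != 0 ->
  (forall i, M0 i <= m i)%N -> m = M0.
Proof.
move=> [wM bF tF] h le; apply: tF => //; apply/eqP; rewrite eqn_leq bF //=.
by rewrite -wM wt_mono.
Qed.
End Weight.

Notation nV := (3 * 3 + 3 * 3)%N.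
Definition vx (i j : 'I_3) : 'I_nV := lshift (3 * 3) (mxvec_index i j).
Definition vy (i j : 'I_3) : 'I_nV := rshift (3 * 3) (mxvec_index i j).
Definition vdat := (bool * 'I_3 * 'I_3)%type.
Definition code (d : vdat) : 'I_nV :=
  let: (b, i, j) := d in if b then vy i j else vx i j.
Definition dec (k : 'I_(3 * 3)) : 'I_3 * 'I_3 :=
  enum_val (cast_ord (esym (mxvec_cast 3 3)) k).
Lemma decK i j : dec (mxvec_index i j) = (i, j).
Proof. by rewrite /dec /mxvec_index cast_ordK enum_rankK. Qed.
Definition decode (v : 'I_nV) : vdat :=
  match split v with inl k => (false, (dec k).1, (dec k).2)
                   | inr k => (true, (dec k).1, (dec k).2) end.
Lemma codeK : cancel code decode.
Proof.
move=> [[[] i] j]; rewrite /decode /=.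
  by rewrite /vy (unsplitK (inr _ _)) decK.
by rewrite /vx (unsplitK (inl _ _)) decK.
Qed.
Lemma code_inj : injective code. Proof. exact: can_inj codeK. Qed.
Lemma decodeK : cancel decode code.
Proof.
move=> v; rewrite -[v]splitK /decode unsplitK.
by case: (split v) => k; case/mxvec_indexP: k => i j; rewrite decK.
Qed.

Definition WX := [:: 12; 10; 12; 14; 1; 11; 4; 16; 1]%N.
Definition WY := [:: 4; 13; 3; 9; 7; 17; 11; 12; 5]%N.
Definition Wd (d : vdat) : nat :=
  let: (b, i, j) := d in nth 0%N (if b then WY else WX) (i * 3 + j).
Definition w (v : 'I_nV) : nat := Wd (decode v).
Lemma w_code d : w (code d) = Wd d.
Proof. by rewrite /w codeK. Qed.

Section Concrete.
Variable K : fieldType.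
Local Notation R := (polyR K).

Definition o0 : 'I_3 := ord0.
Definition o1 : 'I_3 := lift ord0 (ord0 : 'I_2).
Definition o2 : 'I_3 := lift ord0 (lift ord0 (ord0 : 'I_1)).

Definition Tm := (vdat * vdat * K)%type.
Definition mono (t : Tm) : 'X_{1..nV} := (U_(code t.1.1) + U_(code t.1.2))%MM.
Definition Wt (t : Tm) : nat := (Wd t.1.1 + Wd t.1.2)%N.
Definition E (s : seq Tm) : R := \sum_(t <- s) t.2 *: 'X_[mono t].

Definition L (i j : 'I_3) : seq Tm :=
  [:: ((false, i, o0), (true, o0, j), 1); ((true, i, o0), (false, o0, j), -1);
      ((false, i, o1), (true, o1, j), 1); ((true, i, o1), (false, o1, j), -1);
      ((false, i, o2), (true, o2, j), 1); ((true, i, o2), (false, o2, j), -1)].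

Lemma commXY_L i j : commXY K i j = E (L i j).
Proof.
rewrite /commXY /E !mxE !big_ord_recl !big_ord0 !big_cons big_nil !mxE.
rewrite /mono /= !mpolyXD !scale1r !scaleN1r.
rewrite /o0 /o1 /o2 /vx /vy.
ring.
Qed.

Lemma wt_monoT t : wt w (mono t) = Wt t.
Proof. by rewrite /mono wtD !wtU !w_code. Qed.

Lemma top_scX (c : K) m : top w (c *: 'X_[m] : R) (wt w m) m /\ (c *: 'X_[m] : R)@_m = c.
Proof.
rewrite mcoeffZ mcoeffX eqxx mulr1; split => //; split => //.
  by move=> m'; rewrite mcoeffZ mcoeffX; have [->|] := eqVneq m m'; rewrite ?mulr0 ?eqxx.
by move=> m'; rewrite mcoeffZ mcoeffX; have [->|] := eqVneq m m'; rewrite ?mulr0 ?eqxx.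
Qed.

Lemma bounded_sum (I : Type) (r : seq I) (P : pred I) (F : I -> R) b :
  (forall i, P i -> bounded w (F i) b) -> bounded w (\sum_(i <- r | P i) F i) b.
Proof.
move=> h; apply: (big_ind (fun x => bounded w x b)) => //.
- by move=> m; rewrite mcoeff0 eqxx.
- by move=> x y; apply: boundedD.
Qed.

Definition d0 : Tm := ((false, o0, o0), (false, o0, o0), 0).

Lemma top_seq (s : seq Tm) c :
  (c < size s)%N -> (0 < Wt (nth d0 s c))%N ->
  all (fun k => (k == c) || (Wt (nth d0 s k) < Wt (nth d0 s c))%N) (iota 0 (size s)) ->
  top w (E s) (Wt (nth d0 s c)) (mono (nth d0 s c)) /\
  (E s)@_(mono (nth d0 s c)) = (nth d0 s c).2.
Proof.
move=> hc pos /allP hall; rewrite /E (big_nth d0 xpredT) big_mkord.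
rewrite (bigD1 (Ordinal hc)) //=.
have [t1 c1] := top_scX (nth d0 s c).2 (mono (nth d0 s c)); rewrite wt_monoT in t1.
have bQ : bounded w (\sum_(i < size s | i != Ordinal hc)
    (nth d0 s i).2 *: 'X_[mono (nth d0 s i)]) (Wt (nth d0 s c)).-1.
  apply: bounded_sum => k /= hk m; rewrite mcoeffZ mcoeffX.
  have [<- _|] := eqVneq (mono (nth d0 s k)) m; last by rewrite mulr0 eqxx.
  rewrite wt_monoT -ltnS prednK //.
  have := hall k; rewrite mem_iota add0n ltn_ord => /(_ isT).
  have hk' : (nat_of_ord k == c) = false by apply/negbTE; apply: contra hk => /eqP e; apply/eqP/val_inj.
  by rewrite hk'.
have lt : ((Wt (nth d0 s c)).-1 < Wt (nth d0 s c))%N by rewrite prednK.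
by have [? ->] := topD t1 bQ lt.
Qed.

Definition cidx (i j : 'I_3) : nat :=
  nth 0%N (nth [::] [:: [:: 0; 0; 2]; [:: 4; 0; 1]; [:: 3; 2; 0]]%N i) j.
Definition lt_ (i j : 'I_3) : Tm := nth d0 (L i j) (cidx i j).
Definition A (i j : 'I_3) : nat := Wt (lt_ i j).
Definition Ld (i j : 'I_3) : 'X_{1..nV} := mono (lt_ i j).
Definition Cf (i j : 'I_3) : K := (lt_ i j).2.

Lemma top_g (i j : 'I_3) : i != j ->
  top w (commXY K i j) (A i j) (Ld i j) /\ (commXY K i j)@_(Ld i j) = Cf i j.
Proof.
move=> ij; rewrite commXY_L; apply: top_seq.
- by rewrite /cidx; case: i ij => [[|[|[|?]]] ?] //; case: j => [[|[|[|?]]] ?].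
- by case: i ij => [[|[|[|?]]] ?] //; case: j => [[|[|[|?]]] ?].
- by case: i ij => [[|[|[|?]]] ?] //; case: j => [[|[|[|?]]] ?].
Qed.

Lemma top_big (I : Type) (r : seq I) (P : pred I) (F : I -> R) (a : I -> nat)
    (M : I -> 'X_{1..nV}) (c : I -> K) :
  (forall i, P i -> top w (F i) (a i) (M i) /\ (F i)@_(M i) = c i) ->
  top w (\prod_(i <- r | P i) F i) (\sum_(i <- r | P i) a i)%N
      (\big[+%MM/0%MM]_(i <- r | P i) M i) /\
  (\prod_(i <- r | P i) F i)@_(\big[+%MM/0%MM]_(i <- r | P i) M i) = \prod_(i <- r | P i) c i.
Proof.
move=> h; elim: r => [|x r [t1 c1]].
  by rewrite !big_nil; have := topX K w 0%MM; rewrite mpolyX0 wt0.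
rewrite !big_cons; case: (P x) (h x) => // /(_ isT) [tx cx].
by have [? ->] := topM tx t1; rewrite cx c1.
Qed.

Definition G : R := \prod_(i < 3) \prod_(j < 3 | i != j) commXY K i j.
Definition LG : 'X_{1..nV} := \big[+%MM/0%MM]_(i < 3) \big[+%MM/0%MM]_(j < 3 | i != j) Ld i j.
Definition AG : nat := (\sum_(i < 3) \sum_(j < 3 | i != j) A i j)%N.
Definition CG : K := \prod_(i < 3) \prod_(j < 3 | i != j) Cf i j.

Lemma top_G : top w G AG LG /\ G@_LG = CG.
Proof.
apply: top_big => i _; apply: top_big => j; exact: top_g.
Qed.

Lemma mnm_big (I : Type) (r : seq I) (P : pred I) (M : I -> 'X_{1..nV}) v :
  (\big[+%MM/0%MM]_(i <- r | P i) M i) v = (\sum_(i <- r | P i) M i v)%N.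
Proof.
by apply: (big_morph (fun m : 'X_{1..nV} => m v)) => [x y|]; rewrite ?mnmDE ?mnmE.
Qed.

Lemma sum3c (i : 'I_3) (F : 'I_3 -> nat) : (\sum_(j < 3 | i != j) F j =
  (if i != o0 then F o0 else 0) + (if i != o1 then F o1 else 0) + (if i != o2 then F o2 else 0))%N.
Proof. by rewrite big_mkcond !big_ord_recl big_ord0 /= addn0 addnA. Qed.
Lemma sum3 (F : 'I_3 -> nat) : (\sum_(j < 3) F j = F o0 + F o1 + F o2)%N.
Proof. by rewrite !big_ord_recl big_ord0 addn0 addnA. Qed.

Lemma LG_le1 v : (LG v <= 1)%N.
Proof.
rewrite -[v]decodeK; move: (decode v) => d.
rewrite /LG mnm_big.
under eq_bigr => i _ do rewrite mnm_big.
rewrite sum3 !sum3c.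
rewrite /Ld /mono !mnmDE !mnm1E !(inj_eq code_inj).
case: d => [[b i0] j0]; case: b; case: i0 => [[|[|[|?]]] ?] //; case: j0 => [[|[|[|?]]] ?] //.
Qed.

Definition hm : 'X_{1..nV} := [multinom (1 - LG v)%N | v < nV].
Definition Fp (p : nat) : R := (G * 'X_[hm]) ^+ p.-1.
Definition M0 (p : nat) : 'X_{1..nV} := [multinom p.-1 | v < nV].

Lemma top_F p : top w (Fp p) ((AG + wt w hm) * p.-1) (M0 p) /\ (Fp p)@_(M0 p) = CG ^+ p.-1.
Proof.
have [tG cG] := top_G; have [tX cX] := topX K w hm.
have [t1 c1] := topM tG tX.
have [t2 c2] := topXn p.-1 t1.
have -> : M0 p = ((LG + hm) *+ p.-1)%MM.
  by apply/mnmP => v; rewrite mulmnE mnmDE !mnmE subnKC ?LG_le1 ?mul1n.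
by rewrite /Fp; split => //; rewrite c2 c1 cG cX mulr1.
Qed.

Definition pm1 (x : K) := (x == 1) || (x == -1).
Lemma pm1M x y : pm1 x -> pm1 y -> pm1 (x * y).
Proof.
by move=> /orP[]/eqP-> /orP[]/eqP->; rewrite /pm1 ?mul1r ?mulr1 ?mulrNN ?mulr1 ?eqxx ?orbT.
Qed.
Lemma pm1X x k : pm1 x -> pm1 (x ^+ k).
Proof. by move=> hx; elim: k => [|k IH]; [rewrite expr0 /pm1 eqxx|rewrite exprS pm1M]. Qed.
Lemma pm1_Cf i j : i != j -> pm1 (Cf i j).
Proof.
by case: i => [[|[|[|?]]] ?] //; case: j => [[|[|[|?]]] ?] //; rewrite /pm1 eqxx ?orbT.
Qed.
Lemma pm1_CG : pm1 CG.
Proof.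
apply: (big_ind pm1); [by rewrite /pm1 eqxx|exact: pm1M|] => i _.
apply: (big_ind pm1); [by rewrite /pm1 eqxx|exact: pm1M|] => j; exact: pm1_Cf.
Qed.
End Concrete.

Section Final.
Variables (K : fieldType) (p : nat) (hp : p \in [pchar K]).
Variables (sigma : K -> K).
Hypothesis sD : forall x y, sigma (x + y) = sigma x + sigma y.
Hypothesis sZ : forall l x, sigma (l ^+ p * x) = l * sigma x.
Hypothesis s1 : sigma 1 = 1.
Local Notation R := (polyR K).
Local Notation tr := (@phi K nV p sigma).
Local Notation g := (commXY K).

Lemma trN (x : R) : tr (- x) = - tr x.
Proof. by apply/eqP; rewrite -addr_eq0 -phiD // addNr phi0. Qed.

Definition rest (i j : 'I_3) : R :=
  \prod_(k : 'I_3 * 'I_3 | (k.1 != k.2) && (k != (i, j))) g k.1 k.2.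

Lemma G_split i j : i != j -> G K = g i j * rest i j.
Proof.
by move=> ij; rewrite /G pair_big_dep (bigD1 (i, j)) //=.
Qed.

Definition Q (i j : 'I_3) : R := (rest i j * 'X_[hm K]) ^+ p.-1.

Lemma pgt0 : (0 < p)%N. Proof. by have /andP[/prime_gt0] := hp. Qed.

Lemma F_g i j : i != j -> Fp K p * g i j = g i j ^+ p * Q i j.
Proof.
move=> ij; rewrite /Fp (G_split ij) /Q -mulrA exprMn mulrAC -exprSr prednK //.
exact: pgt0.
Qed.

Lemma trF_I r : in_I r -> in_I (tr (Fp K p * r)).
Proof.
move=> [c ->]; exists (fun i j => tr (Q i j * c i j)).
rewrite mulr_sumr phi_sum //; apply: eq_bigr => i _.
rewrite mulr_sumr phi_sum //; apply: eq_bigr => j ij.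
by rewrite mulrCA F_g // mulrCA phi_frob // mulrC [c i j * _]mulrC.
Qed.

Definition c0 : K := CG K ^+ p.-1.

Lemma c0_pm1 : pm1 c0.
Proof. exact/pm1X/pm1_CG. Qed.

Lemma sN1 : sigma (-1) = -1.
Proof.
have h := sD 1 (-1); rewrite subrr (s0 sD) s1 in h.
by apply/eqP; rewrite -addr_eq0 addrC -h.
Qed.

Lemma c0_nz : c0 != 0.
Proof. by case/orP: c0_pm1 => /eqP ->; rewrite ?oppr_eq0 oner_eq0. Qed.

Lemma sc0 : sigma c0 = c0.
Proof. by case/orP: c0_pm1 => /eqP ->; rewrite ?s1 ?sN1. Qed.

Lemma trF : tr (Fp K p) = c0%:MP.
Proof.
have [tF cF] := top_F K p.
have M0in : M0 p \in msupp (Fp K p) by rewrite mcoeff_msupp cF c0_nz.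
rewrite /phi (bigD1_seq (M0 p)) ?msupp_uniq //= big_seq_cond big1 ?addr0; last first.
  move=> m /andP[ms mne]; rewrite /T; case: ifP => // gm.
  case/negP: mne; apply/eqP; apply: (top_floor tF); first by rewrite -mcoeff_msupp.
  move=> i; rewrite mnmE; move/forallP: gm => /(_ i)/eqP <-; exact: leq_mod.
rewrite /T; have -> : good p (M0 p).
  apply/forallP => i; rewrite mnmE modn_small //; rewrite prednK //; exact: pgt0.
have -> : divm p (M0 p) = 0%MM.
  apply/mnmP => i; rewrite !mnmE divn_small // prednK //; exact: pgt0.
by rewrite mpolyX0 cF sc0 -mul_mpolyC mulr1.
Qed.

Section Desc.
Variables (S : comPzRingType) (phiS : {rmorphism polyR K -> S}).
Hypothesis phi_surj : forall s : S, exists r, phiS r = s.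
Hypothesis phi_ker : forall r, phiS r = 0 <-> in_I r.

Lemma exS (s : S) : exists r, phiS r == s.
Proof. by have [r e] := phi_surj s; exists r; rewrite e. Qed.
Definition lift (s : S) : R := xchoose (exS s).
Lemma liftK s : phiS (lift s) = s.
Proof. exact/eqP/(xchooseP (exS s)). Qed.

Lemma key r : phiS (tr (Fp K p * lift (phiS r))) = phiS (tr (Fp K p * r)).
Proof.
apply/eqP; rewrite -subr_eq0 -rmorphB -trN -phiD // -mulrN -mulrDr.
apply/eqP/phi_ker/trF_I/phi_ker; by rewrite rmorphB liftK subrr.
Qed.

Definition psi (t : S) : S := phiS (c0^-1)%:MP * phiS (tr (Fp K p * lift t)).

Lemma psiD t1 t2 : psi (t1 + t2) = psi t1 + psi t2.
Proof.
rewrite /psi -mulrDr; congr (_ * _).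
by rewrite -{1}(liftK t1) -{1}(liftK t2) -rmorphD key mulrDr phiD // rmorphD.
Qed.

Lemma psiZ s t : psi (s ^+ p * t) = s * psi t.
Proof.
rewrite /psi mulrCA; congr (_ * _).
rewrite -{1}(liftK s) -{1}(liftK t) -rmorphXn -rmorphM key mulrCA phi_frob //.
by rewrite rmorphM liftK.
Qed.

Lemma psi1 : psi 1 = 1.
Proof.
by rewrite /psi -(rmorph1 phiS) key mulr1 trF -rmorphM -rmorphM mulVf ?c0_nz // rmorph1.
Qed.

Lemma Fpure_S : Fpure S p.
Proof.
move=> M m H.
have := H M (fun x t => psi t *: x).
rewrite psi1 scale1r; apply; split.
- by move=> m1 m2 t; rewrite scalerDr.
- by move=> x t1 t2; rewrite psiD scalerDl.
- by move=> s x t; rewrite psiZ scalerA mulrC.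
Qed.
End Desc.
End Final.

Unset Implicit Arguments.

(* S together with a surjective ring map phi : R -> S with kernel I is R/I. *)
Theorem mainTheorem1 (K : fieldType) (p : nat) (hp : p \in [pchar K])
  (S : comPzRingType) (phi : {rmorphism polyR K -> S})
  (phi_surj : forall s : S, exists r, phi r = s)
  (phi_ker : forall r, phi r = 0 <-> in_I r) :
  Fpure S p.
Proof.
have [sigma [sD sZ s1]] := exists_sigma hp.
exact: (@Fpure_S K p hp sigma sD sZ s1 S phi phi_surj phi_ker).
Qed.
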